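(* Let $G=(V,E)$ be a finite graph with a Bernoulli bond percolation on it, and let $a,b,c\in V$. If $\mathbb{P}(ab\|c)=0$, then $$\mathbb{P}(a\|b\|c)\,\mathbb{P}(abc)=\mathbb{P}(ac\|b)\,\mathbb{P}(a\|bc)\quad\text{and}\quad \mathbb{P}(abc)=\mathbb{P}(ac)\,\mathbb{P}(bc).$$
   Context: A Bernoulli bond percolation on $G$ declares each edge $e\in E$ open independently with its own probability $p_e\in[0,1]$; clusters are connected components of the subgraph of open edges. Notation: $\mathbb{P}(abc)$ is the probability that $a,b,c$ lie in one cluster; $\mathbb{P}(a\|b\|c)$ that they lie in three pairwise different clusters; $\mathbb{P}(ab\|c)$ that $a,b$ lie in the same cluster and $c$ lies in a different cluster (similarly $\mathbb{P}(ac\|b)$ and $\mathbb{P}(a\|bc)$); $\mathbb{P}(ac)$ is the probability that $a$ and $c$ lie in the same cluster (similarly $\mathbb{P}(bc)$). *)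

(* Defs.v *)
From mathcomp Require Import all_boot all_order all_algebra.
Set Implicit Arguments. Unset Strict Implicit. Unset Printing Implicit Defensive.
Import Order.TTheory GRing.Theory Num.Theory.
Local Open Scope ring_scope.

Section Percolation.
Variables (V E : finType) (ends : E -> V * V).

Definition open_adj (w : {ffun E -> bool}) : rel V :=
  fun x y => [exists e, w e && ((ends e == (x, y)) || (ends e == (y, x)))].

Definition conn (w : {ffun E -> bool}) (x y : V) : bool :=
  connect (open_adj w) x y.

Variable R : realFieldType.
Variable p : E -> R.

Definition weight (w : {ffun E -> bool}) : R :=
  \prod_(e : E) (if w e then p e else 1 - p e).

Definition Pr (A : pred {ffun E -> bool}) : R :=
  \sum_(w : {ffun E -> bool} | A w) weight w.

Variables a b c : V.

Definition ev_abc : pred {ffun E -> bool} := fun w => conn w a b && conn w b c.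
Definition ev_a_b_c : pred {ffun E -> bool} :=
  fun w => [&& ~~ conn w a b, ~~ conn w b c & ~~ conn w a c].
Definition ev_ab_c : pred {ffun E -> bool} := fun w => conn w a b && ~~ conn w a c.
Definition ev_ac_b : pred {ffun E -> bool} := fun w => conn w a c && ~~ conn w a b.
Definition ev_a_bc : pred {ffun E -> bool} := fun w => conn w b c && ~~ conn w a b.
Definition ev_ac : pred {ffun E -> bool} := fun w => conn w a c.
Definition ev_bc : pred {ffun E -> bool} := fun w => conn w b c.

End Percolation.

(* Main.v *)
Require Import Defs.
From mathcomp Require Import all_boot all_order all_algebra.
From mathcomp Require Import ring.
Set Implicit Arguments. Unset Strict Implicit. Unset Printing Implicit Defensive.
Import Order.TTheory GRing.Theory Num.Theory.
Local Open Scope ring_scope.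

Section Generic.
Variable V : finType.

Lemma escape (e : rel V) (C : pred V) x y :
  connect e x y -> C y -> exists2 z, C z & connect (fun u v => ~~ C u && e u v) x z.
Proof.
move=> /connectP [s]; elim: s x => [|y1 s IH] x /= Hp Hl Cy.
  by exists x; [rewrite -Hl | exact: connect0].
case/andP: Hp => exy1 Hp.
case Cx: (C x); first by exists x => //; exact: connect0.
have [z Cz cz] := IH y1 Hp Hl Cy.
exists z => //; apply: connect_trans cz; apply: connect1; by rewrite Cx.
Qed.

Lemma transfer (e e' : rel V) (I : pred V) x z :
  connect e x z -> I x -> (forall u v, I u -> e u v -> I v && e' u v) ->
  I z && connect e' x z.
Proof.
move=> /connectP [s]; elim: s x => [|y1 s IH] x /= Hp Hl Ix step.
  by rewrite Hl Ix connect0.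
case/andP: Hp => exy1 Hp.
case/andP: (step _ _ Ix exy1) => Iy1 e'xy1.
case/andP: (IH y1 Hp Hl Iy1 step) => -> c.
by rewrite (connect_trans (connect1 e'xy1) c).
Qed.

End Generic.

Section Indep.
Variables (E : finType) (R : realFieldType) (p : E -> R).
Definition wm : {ffun E -> bool} := [ffun e => p e == 1].
Definition wM : {ffun E -> bool} := [ffun e => p e != 0].
Definition good (w : {ffun E -> bool}) := forall e, (wm e -> w e) /\ (w e -> wM e).

Lemma weight_good w : weight p w != 0 -> good w.
Proof.
move=> H e; split => Hw.
- apply/negPn/negP => nw; move: H; rewrite /weight (bigD1 e) //= (negbTE nw).
  move: Hw; rewrite /wm ffunE => /eqP ->; by rewrite subrr mul0r eqxx.
- rewrite /wM ffunE; apply/eqP => pe0; move: H.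
  by rewrite /weight (bigD1 e) //= Hw pe0 mul0r eqxx.
Qed.

Lemma good_weight w : good w -> weight p w != 0.
Proof.
move=> H; apply/prodf_neq0 => e _; have [H1 H2] := H e.
case we: (w e).
  by move: (H2 we); rewrite /wM ffunE.
rewrite subr_eq0 eq_sym; apply/negP => /eqP pe1.
by move: (H1); rewrite /wm ffunE pe1 eqxx we => /(_ isT).
Qed.

Lemma total : \sum_(w : {ffun E -> bool}) weight p w = 1.
Proof.
rewrite /weight -(bigA_distr_bigA (fun e (j:bool) => if j then p e else 1 - p e)).
by apply: big1 => e _; rewrite big_bool /= addrC subrK.
Qed.

Definition mg (F : {set E}) (w1 w2 : {ffun E -> bool}) : {ffun E -> bool} :=
  [ffun e => if e \in F then w1 e else w2 e].

Lemma mg_weight F w1 w2 :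
  weight p w1 * weight p w2 = weight p (mg F w1 w2) * weight p (mg F w2 w1).
Proof.
rewrite /weight -!big_split /=; apply: eq_bigr => e _; rewrite !ffunE.
by case: (e \in F) => //; rewrite mulrC.
Qed.

Lemma ifmul (b1 b2 : bool) (x y : R) :
  (if b1 then x else 0) * (if b2 then y else 0) = if b1 && b2 then x * y else 0.
Proof. by case: b1; case: b2; rewrite ?mul0r ?mulr0. Qed.

Lemma indep (F : {set E}) (X Y : pred {ffun E -> bool}) :
  (forall u v, good u -> good v -> (forall e, e \in F -> u e = v e) -> X u = X v) ->
  (forall u v, good u -> good v -> (forall e, e \notin F -> u e = v e) -> Y u = Y v) ->
  Pr p (fun w => X w && Y w) = Pr p X * Pr p Y.
Proof.
move=> hX hY.
rewrite /Pr big_mkcond [\sum_(w | X w) _]big_mkcond [\sum_(w | Y w) _]big_mkcond /= big_distrl /=.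
under [in RHS]eq_bigr => w1 _ do rewrite big_distrr /=.
rewrite pair_bigA /=.
pose h (q : {ffun E -> bool} * {ffun E -> bool}) := (mg F q.1 q.2, mg F q.2 q.1).
have hinj : injective h.
  have hK : cancel h h.
    move=> [w1 w2]; rewrite /h /=; congr pair; apply/ffunP => e; rewrite !ffunE;
    by case: (e \in F).
  exact: can_inj hK.
rewrite (reindex_inj hinj) /=.
transitivity (\sum_(w1 : {ffun E -> bool}) \sum_(w2 : {ffun E -> bool})
   (if X w1 && Y w1 then weight p w1 else 0) * weight p w2).
  by apply: eq_bigr => w1 _; rewrite -big_distrr /= total mulr1.
rewrite pair_bigA; apply: eq_bigr => [[w1 w2]] _ /=.
rewrite ifmul.
have -> : (if X w1 && Y w1 then weight p w1 else 0) * weight p w2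
   = if X w1 && Y w1 then weight p w1 * weight p w2 else 0.
  by case: ifP; rewrite ?mul0r.
rewrite (mg_weight F w1 w2).
case: (eqVneq (weight p (mg F w1 w2) * weight p (mg F w2 w1)) 0) => [->|nz].
  by case: ifP; case: ifP.
move: (nz); rewrite -mg_weight mulf_eq0 negb_or => /andP [n1 n2].
move: nz; rewrite mulf_eq0 negb_or => /andP [n3 n4].
have g1 := weight_good n1; have g2 := weight_good n2.
have g3 := weight_good n3; have g4 := weight_good n4.
rewrite (hX w1 (mg F w1 w2)) //; last by move=> e eF; rewrite ffunE eF.
by rewrite (hY w1 (mg F w2 w1)) //; move=> e eF; rewrite ffunE (negbTE eF).
Qed.

End Indep.

Section Graph.
Variables (V E : finType) (ends : E -> V * V) (R : realFieldType) (p : E -> R).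
Hypothesis hp : forall e, 0 <= p e <= 1.
Variables a b c : V.
Hypothesis H0 : Pr p (ev_ab_c ends a b c) = 0.

Lemma weight_ge0 w : 0 <= weight p w.
Proof.
apply: prodr_ge0 => e _; case: (w e); have /andP [h1 h2] := hp e => //.
by rewrite subr_ge0.
Qed.

Lemma zero_ev w : ev_ab_c ends a b c w -> weight p w = 0.
Proof. by move=> h; apply: (psumr_eq0P (fun w _ => weight_ge0 w) H0). Qed.

Lemma adj_sym (w : {ffun E -> bool}) : symmetric (open_adj ends w).
Proof.
move=> x y; apply/existsP/existsP => [] [e /andP [we h]]; exists e;
by rewrite we orbC.
Qed.

Lemma conn_sym (w : {ffun E -> bool}) x y : conn ends w x y = conn ends w y x.
Proof. exact: (sym_connect_sym (adj_sym w)). Qed.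

Lemma conn_trans (w : {ffun E -> bool}) x y z : conn ends w x y -> conn ends w y z -> conn ends w x z.
Proof. exact: connect_trans. Qed.

Lemma adjE (w : {ffun E -> bool}) x y : open_adj ends w x y ->
  exists2 e, w e & ((ends e).1 = x /\ (ends e).2 = y) \/ ((ends e).1 = y /\ (ends e).2 = x).
Proof.
case/existsP => e /andP [we /orP [] /eqP h]; exists e => //; rewrite h; by [left|right].
Qed.

Lemma adjI (w : {ffun E -> bool}) x y e : w e ->
  ((ends e).1 = x /\ (ends e).2 = y) \/ ((ends e).1 = y /\ (ends e).2 = x) ->
  open_adj ends w x y.
Proof.
move=> we h; apply/existsP; exists e; rewrite we /=.
case: h => [[h1 h2]|[h1 h2]]; apply/orP; [left|right];
by rewrite -h1 -h2 -surjective_pairing.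
Qed.

Lemma adj_mono (u v : {ffun E -> bool}) x y : (forall e, u e -> v e) ->
  open_adj ends u x y -> open_adj ends v x y.
Proof. by move=> uv /adjE [e ue h]; apply: (adjI (uv _ ue) h). Qed.

Lemma conn_mono (u v : {ffun E -> bool}) x y : (forall e, u e -> v e) ->
  conn ends u x y -> conn ends v x y.
Proof.
move=> uv h; have := transfer (e' := open_adj ends v) (I := predT) h isT.
by case/(_ _)/andP => // u0 v0 _ huv; rewrite /= (adj_mono uv huv).
Qed.

Definition Cs : pred V := fun v => conn ends (wm p) c v.
Definition r2 : rel V := fun x y => [&& ~~ Cs x, ~~ Cs y & open_adj ends (wM p) x y].
Definition Ts : pred V := fun v => connect r2 a v.
Definition inTC : pred V := fun v => Ts v && ~~ Cs v.
Definition Fs : {set E} := [set e | inTC (ends e).1 || inTC (ends e).2].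

Lemma wm_wM e : wm p e -> wM p e.
Proof. by rewrite !ffunE => /eqP ->; rewrite oner_neq0. Qed.

Lemma Ts_step x y : Ts x -> r2 x y -> Ts y.
Proof. by move=> tx rxy; apply: connect_trans tx (connect1 rxy). Qed.

Lemma inF x y e :
  ((ends e).1 = x /\ (ends e).2 = y) \/ ((ends e).1 = y /\ (ends e).2 = x) ->
  (e \in Fs) = inTC x || inTC y.
Proof. by rewrite inE => -[[-> ->]|[-> ->]] //; rewrite orbC. Qed.

Lemma connC_to_c (v : {ffun E -> bool}) z : good p v -> Cs z -> conn ends v z c.
Proof.
move=> gv Cz; apply: (conn_mono (u := wm p)); first by move=> e /(proj1 (gv e)).
by rewrite conn_sym.
Qed.

Lemma claimA u v : good p u -> good p v -> (forall e, e \in Fs -> u e = v e) ->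
  conn ends u a c -> conn ends v a c.
Proof.
move=> gu gv huv cu.
have cC : Cs c by exact: connect0.
have [z Cz cz] := escape cu cC.
have := transfer (e' := open_adj ends v) (I := fun x => Ts x || Cs x) cz.
case/(_ _ _)/andP.
- by rewrite /= /Ts connect0.
- move=> x y /= Ix /andP [nCx /adjE [e ue he]].
  have Tx : Ts x by move: Ix; rewrite (negbTE nCx) orbF.
  have eF : e \in Fs by rewrite (inF he) /inTC Tx nCx.
  rewrite (adjI _ he) ?andbT; last by rewrite -huv.
  case Cy: (Cs y); rewrite ?orbT //.
  apply/orP; left; apply: Ts_step Tx _.
  by rewrite /r2 nCx Cy /=; apply: (adjI (proj2 (gu e) ue) he).
- move=> _ cvz; apply: conn_trans cvz _; exact: connC_to_c.
Qed.

Lemma claimB u v : Cs b \/ ~~ Ts b ->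
  good p u -> good p v -> (forall e, e \notin Fs -> u e = v e) ->
  conn ends u b c -> conn ends v b c.
Proof.
case=> [Cb|nTb] gu gv huv cu; first by apply: connC_to_c.
have cC : Cs c by exact: connect0.
have [z Cz cz] := escape cu cC.
have := transfer (e' := open_adj ends v) (I := fun x => ~~ Ts x || Cs x) cz.
case/(_ _ _)/andP.
- by rewrite /= nTb.
- move=> x y /= Ix /andP [nCx /adjE [e ue he]].
  have nTx : ~~ Ts x by move: Ix; rewrite (negbTE nCx) orbF.
  have Iy : ~~ Ts y || Cs y.
    case Cy: (Cs y); rewrite ?orbT ?orbF //; apply/negP => Ty.
    move/negP: nTx; apply; apply: Ts_step Ty _.
    rewrite /r2 Cy nCx /=; rewrite adj_sym; apply: (adjI (proj2 (gu e) ue) he).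
  have eF : e \notin Fs.
    by rewrite (inF he) /inTC negb_or !negb_and nTx /= negbK.
  by rewrite Iy (adjI _ he) // -huv.
- move=> _ cvz; apply: conn_trans cvz _; exact: connC_to_c.
Qed.

Lemma Hb : Cs b \/ ~~ Ts b.
Proof.
case Cb: (Cs b); [by left | right]; apply/negP => Tb.
have nCa : ~~ Cs a.
  apply/negP => Ca; move: Tb; rewrite /Ts => /connectP [[|y s] /=].
    by move=> _ eb; move: Cb; rewrite eb Ca.
  by rewrite /r2 Ca.
pose w0 : {ffun E -> bool} :=
  [ffun e => wm p e || [&& inTC (ends e).1, inTC (ends e).2 & wM p e]].
have g0 : good p w0.
  move=> e; rewrite /w0 ffunE; split => [->//|/orP [/wm_wM //|/and3P [_ _ //]]].
have := zero_ev (w := w0); rewrite /ev_ab_c.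
have -> : conn ends w0 a b.
  have := transfer (e' := open_adj ends w0) (I := Ts) Tb.
  case/(_ _ _)/andP => //; first by rewrite /Ts connect0.
  move=> x y Tx rxy; have Ty := Ts_step Tx rxy; rewrite Ty /=.
  case/and3P: rxy => nCx nCy /adjE [e we he]; apply: (adjI _ he).
  rewrite /w0 ffunE we andbT; apply/orP; right.
  by case: he => -[-> ->]; rewrite /inTC ?Tx ?Ty ?nCx ?nCy.
have -> /= : ~~ conn ends w0 a c.
  apply/negP => h; have cC : Cs c by exact: connect0.
  have [z Cz cz] := escape h cC.
  have := transfer (e' := fun _ _ => true) (I := inTC) cz.
  case/(_ _ _)/andP.
  - by rewrite /inTC /Ts connect0 nCa.
  - move=> x y /andP [Tx _] /andP [nCx /adjE [e we he]].
    have nCy : ~~ Cs y.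
      apply/negP => Cy; move: we; rewrite /w0 ffunE => /orP [wme|].
        move/negP: nCx; apply; apply: conn_trans Cy _.
        by apply: connect1; apply: (adjI wme); case: he => -[-> ->]; [right|left].
      by case: he => -[-> ->]; rewrite /inTC Cy !andbF.
    have wMe : wM p e.
      by move: we; rewrite /w0 ffunE => /orP [/wm_wM //|/and3P []].
    rewrite /inTC nCy andbT andbT; apply: Ts_step Tx _.
    by rewrite /r2 nCx nCy /=; apply: adjI wMe he.
  - by rewrite /inTC Cz andbF.
by move/(_ isT)/eqP; rewrite (negbTE (good_weight g0)).
Qed.

End Graph.

Lemma Pr_ext (E : finType) (R : realFieldType) (p : E -> R) (X Y : pred {ffun E -> bool}) :
  X =1 Y -> Pr p X = Pr p Y.
Proof. by move=> h; apply: eq_bigl. Qed.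

Lemma Pr_split (E : finType) (R : realFieldType) (p : E -> R) (X Y : pred {ffun E -> bool}) :
  Pr p X = Pr p (fun w => X w && Y w) + Pr p (fun w => X w && ~~ Y w).
Proof. by rewrite /Pr (bigID Y). Qed.

Theorem mainTheorem7 (V E : finType) (ends : E -> V * V) (R : realFieldType)
  (p : E -> R) (hp : forall e, 0 <= p e <= 1) (a b c : V) :
  Pr p (ev_ab_c ends a b c) = 0 ->
  Pr p (ev_a_b_c ends a b c) * Pr p (ev_abc ends a b c)
    = Pr p (ev_ac_b ends a b c) * Pr p (ev_a_bc ends a b c)
  /\ Pr p (ev_abc ends a b c)
    = Pr p (ev_ac ends a c) * Pr p (ev_bc ends b c).
Proof.
move=> H0.
have hb := Hb hp H0.
have hind : Pr p (fun w => ev_ac ends a c w && ev_bc ends b c w)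
            = Pr p (ev_ac ends a c) * Pr p (ev_bc ends b c).
  apply: (indep (F := Fs ends p a c)).
  - move=> u v gu gv huv; apply/idP/idP; first exact: claimA.
    by apply: claimA => // e eF; rewrite huv.
  - move=> u v gu gv huv; apply/idP/idP; first exact: (claimB hb gu gv huv).
    by apply: (claimB hb gv gu) => e eF; rewrite huv.
have Pr_congr : forall X Y : pred {ffun E -> bool},
    (forall w, ~~ ev_ab_c ends a b c w -> X w = Y w) -> Pr p X = Pr p Y.
  move=> X Y h; rewrite /Pr big_mkcond [in RHS]big_mkcond; apply: eq_bigr => w _.
  case Ew: (ev_ab_c ends a b c w); first by rewrite (zero_ev hp H0 Ew); case: ifP; case: ifP.
  by rewrite h ?Ew.
have tri : forall w, [/\ conn ends w a b -> conn ends w b c -> conn ends w a c,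
    conn ends w a c -> conn ends w b c -> conn ends w a b &
    conn ends w a b -> conn ends w a c -> conn ends w b c].
  move=> w; split => h1 h2.
  - exact: conn_trans h1 h2.
  - by apply: conn_trans h1 _; rewrite conn_sym.
  - by apply: conn_trans _ h2; rewrite conn_sym.
set A := ev_ac ends a c; set B := ev_bc ends b c.
have eabc : Pr p (ev_abc ends a b c) = Pr p (fun w => A w && B w).
  apply: Pr_ext => w; rewrite /ev_abc /A /B /ev_ac /ev_bc.
  move: (tri w); case: (conn ends w a b); case: (conn ends w b c);
     case: (conn ends w a c) => -[t1 t2 t3] //;
     solve [by have := t1 isT isT | by have := t2 isT isT | by have := t3 isT isT].
have eabc' : Pr p (ev_a_b_c ends a b c) = Pr p (fun w => ~~ A w && ~~ B w).
  apply: Pr_congr => w; rewrite /ev_ab_c /ev_a_b_c /A /B /ev_ac /ev_bc.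
  by case: (conn ends w a b); case: (conn ends w b c); case: (conn ends w a c).
have eacb : Pr p (ev_ac_b ends a b c) = Pr p (fun w => A w && ~~ B w).
  apply: Pr_ext => w; rewrite /ev_ac_b /A /B /ev_ac /ev_bc.
  move: (tri w); case: (conn ends w a b); case: (conn ends w b c);
     case: (conn ends w a c) => -[t1 t2 t3] //;
     solve [by have := t1 isT isT | by have := t2 isT isT | by have := t3 isT isT].
have eabc2 : Pr p (ev_a_bc ends a b c) = Pr p (fun w => ~~ A w && B w).
  apply: Pr_ext => w; rewrite /ev_a_bc /A /B /ev_ac /ev_bc.
  move: (tri w); case: (conn ends w a b); case: (conn ends w b c);
     case: (conn ends w a c) => -[t1 t2 t3] //;
     solve [by have := t1 isT isT | by have := t2 isT isT | by have := t3 isT isT].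
have sA := Pr_split p A B.
have sB : Pr p B = Pr p (fun w => A w && B w) + Pr p (fun w => ~~ A w && B w).
  rewrite (Pr_split p B A); congr (_ + _); apply: Pr_ext => w; by rewrite /= andbC.
have s1 : 1 = Pr p A + Pr p (fun w => ~~ A w).
  rewrite -(total p) -(Pr_split p predT A) /Pr.
  by apply: eq_bigl.
have sNA := Pr_split p (fun w => ~~ A w) B.
rewrite eabc hind eabc' eacb eabc2; split => //.
rewrite hind in sA sB.
move: s1 sNA sA sB.
set x := Pr p A; set y := Pr p B; set q := x * y.
set n := Pr p (fun w => ~~ A w); set nn := Pr p (fun w => ~~ A w && ~~ B w).
set ab := Pr p (fun w => A w && ~~ B w); set ba := Pr p (fun w => ~~ A w && B w).
move=> s1 sNA sA sB.
have -> : nn = (1 - x - y + q) by rewrite s1 sNA sB; ring.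
have -> : ab = x - q by rewrite sA; ring.
have -> : ba = y - q by rewrite sB; ring.
rewrite /q; ring.
Qed.
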